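(* Let $T:\mathbb{R}^n\to\mathbb{R}^n$ be an averaged operator with $\mathrm{Fix}(T)\neq\emptyset$ such that $\mathrm{Id}-T$ is coercive, i.e. $\lim_{\|x\|\to\infty}\|x-T(x)\|=\infty$. Let $\{x^k\}$ be a sequence generated by the Safe-L2O method (described in the context) with fallback operator $T$, any sequence of L2O maps $\{\mathcal{L}_k\}$, any $\alpha\in[0,1)$, and a safeguard sequence $\{\mu_k\}$ satisfying the following condition: if the inequality $\|y^k-T(y^k)\|\le\alpha\mu_k$ holds for infinitely many $k$, then $\mu_k\to 0$. Then $$\lim_{k\to\infty} d_{\mathrm{Fix}(T)}(x^k)=0 .$$ Moreover, if $\{x^k\}$ has exactly one cluster point, then $\{x^k\}$ converges to a point $x^\star\in\mathrm{Fix}(T)$.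
   Context: $\|\cdot\|$ is the Euclidean norm on $\mathbb{R}^n$. $\mathrm{Fix}(T):=\{x\in\mathbb{R}^n: T(x)=x\}$ and $d_C(x):=\inf\{\|x-y\|:y\in C\}$. An operator $Q:\mathbb{R}^n\to\mathbb{R}^n$ is nonexpansive if $\|Qx-Qy\|\le\|x-y\|$ for all $x,y$; an operator $T$ is averaged if $T=(1-\lambda)\mathrm{Id}+\lambda Q$ for some $\lambda\in(0,1)$ and some nonexpansive $Q$. Safe-L2O method: fix maps $\mathcal{L}_k:\mathbb{R}^n\to\mathbb{R}^n$ ($k\in\mathbb{N}$; e.g. $\mathcal{L}_k=\mathcal{L}_{\mathrm{L2O}}(\cdot;\zeta^k)$ for a parameterized family and arbitrary parameters $\zeta^k$), an averaged fallback operator $T$, $\alpha\in[0,1)$, and an initial point $x^1\in\mathbb{R}^n$. Set $\mu_1:=\|x^1-T(x^1)\|$. For $k=1,2,\dots$: compute $y^k:=\mathcal{L}_k(x^k)$; if $\|y^k-T(y^k)\|\le\alpha\mu_k$, set $x^{k+1}:=y^k$, otherwise set $x^{k+1}:=T(x^k)$; then compute a new nonnegative value $\mu_{k+1}$ by some safeguard update rule (which may depend on the iterates generated so far). *)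

(* Defs.v *)
(* classical reals. R^n is modelled as real sequences supported on {0,...,n-1}. *)
From Stdlib Require Import Reals Lra Lia ClassicalEpsilon.
Open Scope R_scope.

Definition vec (n : nat) : Type := { v : nat -> R | forall i, (n <= i)%nat -> v i = 0 }.

Definition coord {n : nat} (x : vec n) : nat -> R := proj1_sig x.

Lemma vadd_supp n (u v : vec n) :
  forall i, (n <= i)%nat -> coord u i + coord v i = 0.
Proof. intros i Hi. unfold coord. rewrite (proj2_sig u i Hi), (proj2_sig v i Hi). lra. Qed.

Lemma vscale_supp n (a : R) (u : vec n) :
  forall i, (n <= i)%nat -> a * coord u i = 0.
Proof. intros i Hi. unfold coord. rewrite (proj2_sig u i Hi). lra. Qed.

Definition vadd {n : nat} (u v : vec n) : vec n :=
  exist _ (fun i => coord u i + coord v i) (vadd_supp n u v).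
Definition vscale {n : nat} (a : R) (u : vec n) : vec n :=
  exist _ (fun i => a * coord u i) (vscale_supp n a u).
Definition vsub {n : nat} (u v : vec n) : vec n := vadd u (vscale (-1) v).

Fixpoint sumsq (v : nat -> R) (k : nat) : R :=
  match k with
  | O => 0
  | S k' => sumsq v k' + v k' ^ 2
  end.

Definition vnorm {n : nat} (x : vec n) : R := sqrt (sumsq (coord x) n).

Definition nonexpansive {n : nat} (Q : vec n -> vec n) : Prop :=
  forall x y, vnorm (vsub (Q x) (Q y)) <= vnorm (vsub x y).

Definition averaged {n : nat} (T : vec n -> vec n) : Prop :=
  exists (lam : R) (Q : vec n -> vec n),
    0 < lam < 1 /\ nonexpansive Q /\
    forall x, T x = vadd (vscale (1 - lam) x) (vscale lam (Q x)).

Definition Fix {n : nat} (T : vec n -> vec n) : vec n -> Prop := fun x => T x = x.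

Definition is_inf (D : R -> Prop) (m : R) : Prop :=
  (forall r, D r -> m <= r) /\ (forall m', (forall r, D r -> m' <= r) -> m' <= m).

(* d_C(x) = inf { ||x - y|| : y in C } (chosen by epsilon; the infimum exists
   whenever C is nonempty, which is the only case used) *)
Definition dist_set {n : nat} (C : vec n -> Prop) (x : vec n) : R :=
  epsilon (inhabits 0)
    (is_inf (fun r => exists y, C y /\ r = vnorm (vsub x y))).

Definition coercive_residual {n : nat} (T : vec n -> vec n) : Prop :=
  forall M : R, exists r : R, forall x, vnorm x > r -> vnorm (vsub x (T x)) > M.

Definition cluster_point {n : nat} (x : nat -> vec n) (p : vec n) : Prop :=
  forall eps, eps > 0 -> forall N : nat, exists k, (N <= k)%nat /\ vnorm (vsub (x k) p) < eps.

Definition vconverges {n : nat} (x : nat -> vec n) (p : vec n) : Prop :=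
  forall eps, eps > 0 -> exists N : nat, forall k, (N <= k)%nat -> vnorm (vsub (x k) p) < eps.

(* Safe-L2O iteration, indices shifted so that x 0 = x^1, y k = y^{k+1}, mu k = mu_{k+1} *)
Definition safe_L2O {n : nat} (T : vec n -> vec n) (L : nat -> vec n -> vec n)
  (alpha : R) (x y : nat -> vec n) (mu : nat -> R) : Prop :=
  mu 0%nat = vnorm (vsub (x 0%nat) (T (x 0%nat))) /\
  (forall k, 0 <= mu k) /\
  (forall k, y k = L k (x k)) /\
  (forall k, vnorm (vsub (y k) (T (y k))) <= alpha * mu k -> x (S k) = y k) /\
  (forall k, ~ (vnorm (vsub (y k) (T (y k))) <= alpha * mu k) -> x (S k) = T (x k)).

(* Main.v *)
Require Import Defs.
From Stdlib Require Import Reals Lra Lia Psatz Classical ClassicalEpsilon FunctionalExtensionality ProofIrrelevance Rtopology.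
Open Scope R_scope.

Lemma sumsq_nonneg f k : 0 <= sumsq f k.
Proof. induction k; simpl; [lra|]. nra. Qed.

Lemma sumsq_le3 (f g h w : nat -> R) a b c k :
  (forall i, (i < k)%nat -> f i ^ 2 <= a * g i ^ 2 + b * h i ^ 2 + c * w i ^ 2) ->
  sumsq f k <= a * sumsq g k + b * sumsq h k + c * sumsq w k.
Proof.
  induction k; intros H; simpl. lra.
  assert (H1 := H k (Nat.lt_succ_diag_r k)).
  assert (IH := IHk (fun i Hi => H i (Nat.lt_lt_succ_r _ _ Hi))).
  nra.
Qed.

Lemma sumsq_term f k i : (i < k)%nat -> f i ^ 2 <= sumsq f k.
Proof.
  induction k; intros H; [lia|]. simpl.
  destruct (Nat.eq_dec i k) as [->|Hne].
  - assert (0 <= sumsq f k) by apply sumsq_nonneg. lra.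
  - assert (f i ^ 2 <= sumsq f k) by (apply IHk; lia). nra.
Qed.

Lemma sumsq_cv (F : nat -> nat -> R) k :
  (forall i, (i < k)%nat -> Un_cv (fun j => F j i) 0) ->
  Un_cv (fun j => sumsq (F j) k) 0.
Proof.
  induction k; intros H.
  - intros eps He. exists 0%nat. intros. simpl. unfold Rdist. rewrite Rminus_0_r, Rabs_R0. lra.
  - assert (IH := IHk (fun i Hi => H i (Nat.lt_lt_succ_r _ _ Hi))).
    assert (Hk := H k (Nat.lt_succ_diag_r k)).
    assert (HC := CV_plus _ _ _ _ IH (CV_mult _ _ _ _ Hk Hk)).
    intros eps He. destruct (HC eps He) as [N HN]. exists N. intros m Hm.
    specialize (HN m Hm). change (sumsq (F m) (S k)) with (sumsq (F m) k + F m k ^ 2). replace (F m k ^ 2) with (F m k * F m k) by ring.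
    replace 0 with (0 + 0 * 0) by ring. exact HN.
Qed.

Definition sq {n} (v : vec n) : R := sumsq (coord v) n.

Lemma coord_vsub n (u v : vec n) i : coord (vsub u v) i = coord u i - coord v i.
Proof. unfold vsub, vadd, vscale, coord; simpl; ring. Qed.

Lemma sq_nonneg' n (v : vec n) : 0 <= sq v.
Proof. apply sumsq_nonneg. Qed.

Lemma vnorm_nonneg n (v : vec n) : 0 <= vnorm v.
Proof. apply sqrt_pos. Qed.

Lemma vnorm_sq n (v : vec n) : vnorm v ^ 2 = sq v.
Proof. unfold vnorm. apply pow2_sqrt. apply sumsq_nonneg. Qed.

Lemma vnorm_lt_of_sq n (v : vec n) e : 0 < e -> sq v < e ^ 2 -> vnorm v < e.
Proof. intros He H. assert (H1 := vnorm_sq n v). assert (H2 := vnorm_nonneg n v).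
  destruct (Rlt_or_le (vnorm v) e); auto. nra. Qed.

Lemma sq_lt_of_vnorm n (v : vec n) e : vnorm v < e -> sq v < e ^ 2.
Proof. intros H. assert (H1 := vnorm_sq n v). assert (H2 := vnorm_nonneg n v). nra. Qed.

Lemma sq_le_of_vnorm n (u v : vec n) : vnorm u <= vnorm v -> sq u <= sq v.
Proof. intros H. assert (H1 := vnorm_sq n u). assert (H2 := vnorm_nonneg n u).
  assert (H3 := vnorm_sq n v). nra. Qed.

Lemma coord_sq_le n (v : vec n) i : coord v i ^ 2 <= sq v.
Proof.
  destruct (Compare_dec.lt_dec i n) as [H|H].
  - apply sumsq_term; auto.
  - unfold coord at 1. rewrite (proj2_sig v i ltac:(lia)). assert (0 <= sq v) by apply sq_nonneg'. nra.
Qed.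

Lemma vec_eq n (u v : vec n) : (forall i, coord u i = coord v i) -> u = v.
Proof. destruct u as [f Hf], v as [g Hg]; unfold coord; simpl; intros H.
  assert (f = g) by (apply functional_extensionality; auto). subst g.
  f_equal. apply proof_irrelevance. Qed.

Lemma sq_abs_bound c B : c ^ 2 <= B -> Rabs c <= B + 1.
Proof. intros H. unfold Rabs; destruct (Rcase_abs c); nra. Qed.

Lemma coordT n (T Q : vec n -> vec n) lam
  (HT : forall x, T x = vadd (vscale (1 - lam) x) (vscale lam (Q x))) x i :
  coord (T x) i = (1 - lam) * coord x i + lam * coord (Q x) i.
Proof. rewrite HT. reflexivity. Qed.

Lemma T_nonexp_sq n (T Q : vec n -> vec n) lam :
  0 < lam < 1 -> nonexpansive Q ->
  (forall x, T x = vadd (vscale (1 - lam) x) (vscale lam (Q x))) ->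
  forall a b, sq (vsub (T a) (T b)) <= sq (vsub a b).
Proof.
  intros Hl HQ HT a b.
  assert (HQs : sq (vsub (Q a) (Q b)) <= sq (vsub a b)) by (apply sq_le_of_vnorm; apply HQ).
  assert (H := sumsq_le3 (coord (vsub (T a) (T b))) (coord (vsub a b)) (coord (vsub (Q a) (Q b)))
     (fun i => (coord a i - coord b i) - (coord (Q a) i - coord (Q b) i))
     (1 - lam) lam (- (lam * (1 - lam))) n).
  assert (Hw := sumsq_nonneg (fun i => (coord a i - coord b i) - (coord (Q a) i - coord (Q b) i)) n).
  unfold sq in *.
  assert (H' : sumsq (coord (vsub (T a) (T b))) n <=
     (1 - lam) * sumsq (coord (vsub a b)) n + lam * sumsq (coord (vsub (Q a) (Q b))) n +
     - (lam * (1 - lam)) * sumsq (fun i => (coord a i - coord b i) - (coord (Q a) i - coord (Q b) i)) n).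
  { apply H. intros i _. rewrite !coord_vsub, !(coordT n T Q lam HT). apply Req_le. ring. }
  assert (lam * sumsq (coord (vsub (Q a) (Q b))) n <= lam * sumsq (coord (vsub a b)) n) by (apply Rmult_le_compat_l; lra).
  assert (0 <= lam * (1 - lam) * sumsq (fun i => (coord a i - coord b i) - (coord (Q a) i - coord (Q b) i)) n) by (apply Rmult_le_pos; nra).
  nra.
Qed.

Lemma KM_step n (T Q : vec n -> vec n) lam :
  0 < lam < 1 -> nonexpansive Q ->
  (forall x, T x = vadd (vscale (1 - lam) x) (vscale lam (Q x))) ->
  forall z x, Fix T z ->
  sq (vsub (T x) z) + ((1 - lam) / lam) * sq (vsub x (T x)) <= sq (vsub x z).
Proof.
  intros Hl HQ HT z x Hz.
  assert (HQz : forall i, coord (Q z) i = coord z i).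
  { intros i. assert (E : coord (T z) i = coord z i) by (rewrite Hz; reflexivity).
    rewrite (coordT n T Q lam HT) in E.
    assert (lam * (coord (Q z) i - coord z i) = 0) by nra.
    destruct (Rmult_integral _ _ H); lra. }
  assert (HQs : sq (vsub (Q x) (Q z)) <= sq (vsub x z)) by (apply sq_le_of_vnorm; apply HQ).
  assert (H : sq (vsub (T x) z) <= (1 - lam) * sq (vsub x z) + lam * sq (vsub (Q x) (Q z)) +
     - ((1 - lam) / lam) * sq (vsub x (T x))).
  { apply sumsq_le3. intros i _. rewrite !coord_vsub, !(coordT n T Q lam HT), HQz.
    apply Req_le. field. lra. }
  assert (lam * sq (vsub (Q x) (Q z)) <= lam * sq (vsub x z)) by (apply Rmult_le_compat_l; lra).
  lra.
Qed.

Lemma extract (P : nat -> nat -> Prop) :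
  (forall N j, exists k, (N < k)%nat /\ P j k) ->
  exists phi : nat -> nat, (forall j, (phi j < phi (S j))%nat) /\ (forall j, P j (phi j)).
Proof.
  intros H.
  assert (C : forall N j, {k | (N < k)%nat /\ P j k})
    by (intros; apply constructive_indefinite_description; auto).
  exists (fix phi j := match j with O => proj1_sig (C O O) | S j' => proj1_sig (C (phi j') (S j')) end).
  split.
  - intros j. simpl. exact (proj1 (proj2_sig (C _ _))).
  - intros [|j]; simpl; exact (proj2 (proj2_sig (C _ _))).
Qed.

Lemma phi_ge (phi : nat -> nat) : (forall j, (phi j < phi (S j))%nat) -> forall j, (j <= phi j)%nat.
Proof. intros H j; induction j; [lia|]. specialize (H j). lia. Qed.

Lemma phi_lt (phi : nat -> nat) : (forall j, (phi j < phi (S j))%nat) ->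
  forall a b, (a < b)%nat -> (phi a < phi b)%nat.
Proof. intros H a b Hab. induction Hab. apply H. specialize (H m). lia. Qed.

Lemma cv_sub u l (psi : nat -> nat) : Un_cv u l -> (forall j, (psi j < psi (S j))%nat) ->
  Un_cv (fun j => u (psi j)) l.
Proof. intros Hu Hp eps He. destruct (Hu eps He) as [N HN]. exists N. intros j Hj.
  apply HN. assert (Hg := phi_ge psi Hp j). lia. Qed.

Lemma bw1 (u : nat -> R) B : (forall k, Rabs (u k) <= B) ->
  exists psi l, (forall j, (psi j < psi (S j))%nat) /\ Un_cv (fun j => u (psi j)) l.
Proof.
  intros HB.
  destruct (Bolzano_Weierstrass u (fun c => -B <= c <= B) (compact_P3 (-B) B)) as [l Hl].
  { intros k. specialize (HB k). unfold Rabs in HB; destruct (Rcase_abs (u k)); lra. }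
  destruct (extract (fun j k => Rabs (u k - l) < / (INR j + 1))) as [psi [Hp1 Hp2]].
  { intros N j.
    assert (Hpos : 0 < / (INR j + 1)) by (apply Rinv_0_lt_compat; assert (H0 := pos_INR j); lra).
    destruct (Hl (disc l (mkposreal _ Hpos)) (S N)) as [p [Hp Hd]].
    - exists (mkposreal _ Hpos). unfold included; auto.
    - exists p. split; [lia|]. exact Hd. }
  exists psi, l. split; auto.
  intros eps He. destruct (archimed_cor1 eps He) as [N [HN HN0]].
  exists N. intros j Hj. unfold Rdist.
  eapply Rlt_le_trans. apply Hp2.
  assert (HNp : 0 < INR N) by (apply lt_0_INR; lia).
  assert (INR N <= INR j + 1) by (assert (H := le_INR _ _ Hj); lra).
  assert (/ (INR j + 1) <= / INR N) by (apply Rinv_le_contravar; lra).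
  lra.
Qed.

Lemma bwn n (z : nat -> vec n) B : (forall k i, coord (z k) i ^ 2 <= B) ->
  exists p : vec n, forall eps, eps > 0 -> forall N, exists k, (N <= k)%nat /\ sq (vsub (z k) p) < eps.
Proof.
  intros HB.
  assert (Cl : forall m, exists (phi : nat -> nat) (l : nat -> R), (forall j, (phi j < phi (S j))%nat) /\
     forall i, (i < m)%nat -> Un_cv (fun j => coord (z (phi j)) i) (l i)).
  { induction m.
    - exists (fun j => j), (fun _ => 0). split; [intros; lia|]. intros; lia.
    - destruct IHm as [phi [l [Hphi Hl]]].
      destruct (bw1 (fun j => coord (z (phi j)) m) (B + 1)) as [psi [lm [Hpsi Hcv]]].
      { intros k. apply sq_abs_bound. apply HB. }
      exists (fun j => phi (psi j)), (fun i => if Nat.eq_dec i m then lm else l i). split.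
      + intros j. apply phi_lt; auto.
      + intros i Hi. destruct (Nat.eq_dec i m) as [->|Hne].
        * exact Hcv.
        * apply (cv_sub (fun j => coord (z (phi j)) i)); auto. apply Hl; lia. }
  destruct (Cl n) as [phi [l [Hphi Hl]]].
  assert (Hsupp : forall i, (n <= i)%nat -> (if Compare_dec.lt_dec i n then l i else 0) = 0).
  { intros i Hi. destruct (Compare_dec.lt_dec i n); [lia|reflexivity]. }
  exists (exist _ (fun i => if Compare_dec.lt_dec i n then l i else 0) Hsupp).
  assert (Hcv : Un_cv (fun j => sq (vsub (z (phi j)) (exist _ (fun i => if Compare_dec.lt_dec i n then l i else 0) Hsupp))) 0).
  { apply (sumsq_cv (fun j => coord (vsub (z (phi j)) (exist _ (fun i => if Compare_dec.lt_dec i n then l i else 0) Hsupp)))).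
    intros i Hi eps He. destruct (Hl i Hi eps He) as [N HN]. exists N. intros j Hj.
    rewrite coord_vsub. unfold coord at 2. simpl. destruct (Compare_dec.lt_dec i n); [|lia].
    specialize (HN j Hj). unfold Rdist in *. rewrite Rminus_0_r. exact HN. }
  intros eps He N. destruct (Hcv eps He) as [J HJ].
  exists (phi (Nat.max J N)). split.
  - assert (H := phi_ge phi Hphi (Nat.max J N)). lia.
  - specialize (HJ (Nat.max J N) ltac:(lia)). unfold Rdist in HJ. rewrite Rminus_0_r in HJ.
    eapply Rle_lt_trans; [apply Rle_abs|]. exact HJ.
Qed.

Lemma res_fix n (T : vec n -> vec n) (x : nat -> vec n) p :
  (forall a b, sq (vsub (T a) (T b)) <= sq (vsub a b)) ->
  (forall eps, eps > 0 -> forall N, exists k, (N <= k)%nat /\ sq (vsub (x k) p) < eps) ->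
  (forall eps, eps > 0 -> exists K, forall k, (K <= k)%nat -> sq (vsub (x k) (T (x k))) < eps) ->
  T p = p.
Proof.
  intros HT Hcl Hres.
  assert (Hb : forall k, sq (vsub p (T p)) <= 6 * sq (vsub (x k) p) + 3 * sq (vsub (x k) (T (x k)))).
  { intros k.
    assert (H := sumsq_le3 (coord (vsub p (T p))) (coord (vsub (x k) p)) (coord (vsub (x k) (T (x k))))
       (coord (vsub (T (x k)) (T p))) 3 3 3 n).
    assert (H2 := HT (x k) p). unfold sq in *.
    assert (H' : sumsq (coord (vsub p (T p))) n <= 3 * sumsq (coord (vsub (x k) p)) n +
       3 * sumsq (coord (vsub (x k) (T (x k)))) n + 3 * sumsq (coord (vsub (T (x k)) (T p))) n).
    { apply H. intros i _. rewrite !coord_vsub.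
      set (A := coord p i). set (D := coord (T p) i). set (X := coord (x k) i). set (Y := coord (T (x k)) i).
      assert (H3 := pow2_ge_0 ((X - A) + (X - Y))). assert (H4 := pow2_ge_0 ((X - A) + (Y - D))).
      assert (H5 := pow2_ge_0 ((X - Y) - (Y - D))). nra. }
    lra. }
  assert (H0 : sq (vsub p (T p)) <= 0).
  { apply Rnot_lt_le. intros Hpos.
    set (e := sq (vsub p (T p))) in *.
    destruct (Hres (e / 6) ltac:(lra)) as [K HK].
    destruct (Hcl (e / 12) ltac:(lra) K) as [k [Hk1 Hk2]].
    specialize (HK k Hk1). specialize (Hb k). lra. }
  assert (Hz : sq (vsub p (T p)) = 0) by (assert (H := sq_nonneg' n (vsub p (T p))); lra).
  symmetry. apply vec_eq. intros i.
  destruct (Compare_dec.lt_dec i n) as [Hi|Hi].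
  - assert (H := sumsq_term (coord (vsub p (T p))) n i Hi). unfold sq in Hz. rewrite Hz in H.
    rewrite coord_vsub in H. nra.
  - unfold coord. rewrite (proj2_sig p i ltac:(lia)), (proj2_sig (T p) i ltac:(lia)). reflexivity.
Qed.

Lemma dist_inf n (T : vec n -> vec n) v : (exists z, Fix T z) ->
  is_inf (fun r => exists y, Fix T y /\ r = vnorm (vsub v y)) (dist_set (Fix T) v).
Proof.
  intros [z Hz]. unfold dist_set. apply epsilon_spec.
  set (D := fun r => exists y, Fix T y /\ r = vnorm (vsub v y)).
  destruct (completeness (fun r => D (- r))) as [m [Hm1 Hm2]].
  - exists 0. intros r [y [_ Hy]]. assert (H := vnorm_nonneg n (vsub v y)). lra.
  - exists (- vnorm (vsub v z)). exists z. split; auto. ring.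
  - exists (- m). split.
    + intros r Hr. assert (- r <= m); [|lra]. apply Hm1. rewrite Ropp_involutive. exact Hr.
    + intros m' Hm'. assert (m <= - m'); [|lra]. apply Hm2. intros r Hr. specialize (Hm' _ Hr). lra.
Qed.

Lemma conclude n (T : vec n -> vec n) (x : nat -> vec n) :
  (forall a b, sq (vsub (T a) (T b)) <= sq (vsub a b)) ->
  (exists z, Fix T z) ->
  (forall eps, eps > 0 -> exists K, forall k, (K <= k)%nat -> sq (vsub (x k) (T (x k))) < eps) ->
  (exists B K, forall k i, (K <= k)%nat -> coord (x k) i ^ 2 <= B) ->
  Un_cv (fun k => dist_set (Fix T) (x k)) 0 /\
  ((exists p, cluster_point x p /\ forall q, cluster_point x q -> q = p) ->
     exists xs, Fix T xs /\ vconverges x xs).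
Proof.
  intros HT HF Hres [B [K HB]].
  assert (Sub : forall Q : nat -> Prop, (forall N, exists k, (N <= k)%nat /\ Q k) ->
     exists (phi : nat -> nat) p, (forall j, Q (phi j)) /\ (forall j, (j <= phi j)%nat) /\
       forall eps, eps > 0 -> forall N, exists j, (N <= j)%nat /\ sq (vsub (x (phi j)) p) < eps).
  { intros Q HQ.
    destruct (extract (fun _ k => (K <= k)%nat /\ Q k)) as [phi [Hp1 Hp2]].
    { intros N _. destruct (HQ (S N + K)%nat) as [k [Hk1 Hk2]]. exists k. split; [lia|]. split; auto; lia. }
    destruct (bwn n (fun j => x (phi j)) B) as [p Hp].
    { intros j i. apply HB. apply Hp2. }
    exists phi, p. split; [intros j; apply Hp2|]. split; [apply phi_ge; auto|]. exact Hp. }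
  assert (Fixc : forall (phi : nat -> nat) p, (forall j, (j <= phi j)%nat) ->
     (forall eps, eps > 0 -> forall N, exists j, (N <= j)%nat /\ sq (vsub (x (phi j)) p) < eps) ->
     T p = p).
  { intros phi p Hge Hp. apply (res_fix n T x p HT); auto.
    intros eps He N. destruct (Hp eps He N) as [j [Hj1 Hj2]]. exists (phi j). split; auto.
    specialize (Hge j). lia. }
  split.
  - intros eps He. apply NNPP. intros Hn.
    assert (Hinf : forall N, exists k, (N <= k)%nat /\ ~ (Rdist (dist_set (Fix T) (x k)) 0 < eps)).
    { intros N. apply NNPP; intro H1; apply Hn; exists N; intros k Hk; apply NNPP; intro H2; apply H1; exists k; auto. }
    destruct (Sub _ Hinf) as [phi [p [HQ [Hge Hp]]]].
    assert (Hfp := Fixc phi p Hge Hp).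
    destruct (Hp (eps ^ 2) ltac:(nra) O) as [j [_ Hj]].
    apply (HQ j).
    destruct (dist_inf n T (x (phi j)) HF) as [Hi1 Hi2].
    assert (Hd1 : dist_set (Fix T) (x (phi j)) <= vnorm (vsub (x (phi j)) p)) by (apply Hi1; exists p; auto).
    assert (Hd0 : 0 <= dist_set (Fix T) (x (phi j))).
    { apply Hi2. intros r [y [_ ->]]. apply vnorm_nonneg. }
    assert (Hv := vnorm_lt_of_sq n _ eps He Hj).
    unfold Rdist. rewrite Rminus_0_r, Rabs_pos_eq by lra. lra.
  - intros [p [Hp Hu]].
    assert (Hfp : T p = p).
    { apply (Fixc (fun j => j) p); [intros; lia|]. intros eps He N.
      destruct (Hp (sqrt eps) (sqrt_lt_R0 _ He) N) as [k [Hk1 Hk2]]. exists k. split; auto.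
      apply sq_lt_of_vnorm in Hk2. rewrite pow2_sqrt in Hk2 by lra. exact Hk2. }
    exists p. split; auto.
    intros eps He. apply NNPP. intros Hn.
    assert (Hinf : forall N, exists k, (N <= k)%nat /\ ~ (vnorm (vsub (x k) p) < eps)).
    { intros N. apply NNPP; intro H1; apply Hn; exists N; intros k Hk; apply NNPP; intro H2; apply H1; exists k; auto. }
    destruct (Sub _ Hinf) as [phi [q [HQ [Hge Hq]]]].
    assert (Hqp : q = p).
    { apply Hu. intros e He' N. destruct (Hq (e ^ 2) ltac:(nra) N) as [j [Hj1 Hj2]].
      exists (phi j). split; [specialize (Hge j); lia|]. apply vnorm_lt_of_sq; auto. }
    subst q.
    destruct (Hq (eps ^ 2) ltac:(nra) O) as [j [_ Hj]].
    apply (HQ j). apply vnorm_lt_of_sq; auto.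
Qed.

Theorem theorem1 (n : nat) (T : vec n -> vec n) (L : nat -> vec n -> vec n)
  (alpha : R) (x y : nat -> vec n) (mu : nat -> R) :
  averaged T ->
  (exists z, Fix T z) ->
  coercive_residual T ->
  0 <= alpha < 1 ->
  safe_L2O T L alpha x y mu ->
  ((forall N : nat, exists k, (N <= k)%nat /\ vnorm (vsub (y k) (T (y k))) <= alpha * mu k) ->
     Un_cv mu 0) ->
  Un_cv (fun k => dist_set (Fix T) (x k)) 0 /\
  ((exists p, cluster_point x p /\ forall q, cluster_point x q -> q = p) ->
     exists xs, Fix T xs /\ vconverges x xs).
Proof.
  intros [lam [Q [Hl [HQ HT]]]] HF Hco Ha [_ [Hmu [_ [Hacc Hrej]]]] Hsafe.
  assert (HTs := T_nonexp_sq n T Q lam Hl HQ HT).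
  assert (HTv : forall a b, vnorm (vsub (T a) (T b)) <= vnorm (vsub a b)).
  { intros a b. apply sqrt_le_1_alt. apply HTs. }
  destruct (classic (forall N : nat, exists k, (N <= k)%nat /\ vnorm (vsub (y k) (T (y k))) <= alpha * mu k))
      as [Hinf|Hfin].
  -
    assert (Hmu0 := Hsafe Hinf).
    assert (Rv : forall e, e > 0 -> exists K, forall k, (K <= k)%nat -> vnorm (vsub (x k) (T (x k))) < e).
    { intros e He. destruct (Hmu0 e He) as [N HN].
      assert (HN' : forall k, (k >= N)%nat -> mu k < e).
      { intros k Hk. specialize (HN k Hk). unfold Rdist in HN. rewrite Rminus_0_r in HN.
        eapply Rle_lt_trans; [apply Rle_abs|exact HN]. }
      destruct (Hinf N) as [k0 [Hk0 Hacck0]].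
      assert (Hall : forall m, vnorm (vsub (x (S k0 + m)%nat) (T (x (S k0 + m)%nat))) < e).
      { induction m.
        - rewrite Nat.add_0_r. rewrite (Hacc k0 Hacck0).
          specialize (HN' k0 Hk0). specialize (Hmu k0). nra.
        - rewrite Nat.add_succ_r. set (k := (S k0 + m)%nat) in *.
          destruct (classic (vnorm (vsub (y k) (T (y k))) <= alpha * mu k)) as [Hc|Hc].
          + rewrite (Hacc k Hc). specialize (HN' k ltac:(unfold k; lia)). specialize (Hmu k). nra.
          + rewrite (Hrej k Hc). eapply Rle_lt_trans; [apply HTv|exact IHm]. }
      exists (S k0). intros k Hk. replace k with (S k0 + (k - S k0))%nat by lia. apply Hall. }
    apply (conclude n T x HTs HF).
    + intros eps He. destruct (Rv (sqrt eps) (sqrt_lt_R0 _ He)) as [K HK]. exists K. intros k Hk.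
      specialize (HK k Hk). apply sq_lt_of_vnorm in HK. rewrite pow2_sqrt in HK by lra. exact HK.
    + destruct (Hco 1) as [r Hr]. destruct (Rv 1 ltac:(lra)) as [K HK].
      exists (r ^ 2), K. intros k i Hk.
      assert (Hxr : vnorm (x k) <= r).
      { apply Rnot_lt_le. intros Hgt. specialize (Hr (x k) Hgt). specialize (HK k Hk). lra. }
      assert (H1 := coord_sq_le n (x k) i). assert (H2 := vnorm_sq n (x k)).
      assert (H3 := vnorm_nonneg n (x k)). nra.
  -
    assert (HN : exists N, forall k, (N <= k)%nat -> x (S k) = T (x k)).
    { apply NNPP. intros H. apply Hfin. intros N. apply NNPP. intros H1. apply H. exists N.
      intros k Hk. apply Hrej. intros H2. apply H1. exists k. auto. }
    destruct HN as [N Hstep]. destruct HF as [z Hz].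
    set (c := (1 - lam) / lam).
    assert (Hc : 0 < c) by (unfold c; apply Rdiv_lt_0_compat; lra).
    assert (KM : forall k, (N <= k)%nat ->
       sq (vsub (x (S k)) z) + c * sq (vsub (x k) (T (x k))) <= sq (vsub (x k) z)).
    { intros k Hk. rewrite (Hstep k Hk). apply (KM_step n T Q lam Hl HQ HT z (x k) Hz). }
    assert (Mono : forall k, (N <= k)%nat ->
       sq (vsub (x (S k)) (T (x (S k)))) <= sq (vsub (x k) (T (x k)))).
    { intros k Hk. rewrite (Hstep k Hk). apply HTs. }
    assert (P : forall m, sq (vsub (x (N + m)%nat) z) + c * INR m * sq (vsub (x (N + m)%nat) (T (x (N + m)%nat)))
                 <= sq (vsub (x N) z)).
    { induction m.
      - rewrite Nat.add_0_r. simpl. lra.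
      - rewrite Nat.add_succ_r, S_INR.
        assert (H1 := KM (N + m)%nat ltac:(lia)). assert (H2 := Mono (N + m)%nat ltac:(lia)).
        assert (H3 := pos_INR m).
        assert (c * (INR m + 1) * sq (vsub (x (S (N + m))) (T (x (S (N + m))))) <=
                c * (INR m + 1) * sq (vsub (x (N + m)%nat) (T (x (N + m)%nat))))
          by (apply Rmult_le_compat_l; nra).
        nra. }
    apply (conclude n T x HTs (ex_intro _ z Hz)).
    + intros eps He.
      set (dN := sq (vsub (x N) z)).
      assert (HdN : 0 <= dN) by apply sq_nonneg'.
      assert (Hpos : 0 < c * eps / (dN + 1)) by (apply Rdiv_lt_0_compat; nra).
      destruct (archimed_cor1 _ Hpos) as [m0 [Hm0 Hm0p]].
      assert (HI : 0 < INR m0) by (apply lt_0_INR; lia).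
      assert (Hbig : dN < c * eps * INR m0).
      { assert (H := Rmult_lt_compat_r (INR m0 * (dN + 1)) _ _ ltac:(nra) Hm0).
        replace (/ INR m0 * (INR m0 * (dN + 1))) with (dN + 1) in H by (field; lra).
        replace (c * eps / (dN + 1) * (INR m0 * (dN + 1))) with (c * eps * INR m0) in H by (field; lra).
        lra. }
      exists (N + m0)%nat. intros k Hk. replace k with (N + (k - N))%nat by lia.
      specialize (P (k - N)%nat).
      assert (H1 := sq_nonneg' n (vsub (x (N + (k - N))%nat) z)).
      assert (H2 : INR m0 <= INR (k - N)) by (apply le_INR; lia).
      apply Rnot_le_lt. intros Hge. fold dN in P.
      assert (c * eps * INR m0 <= c * INR (k - N) * sq (vsub (x (N + (k - N))%nat) (T (x (N + (k - N))%nat)))).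
      { assert (c * eps * INR m0 <= c * eps * INR (k - N)) by (apply Rmult_le_compat_l; nra).
        assert (c * INR (k - N) * eps <= c * INR (k - N) * sq (vsub (x (N + (k - N))%nat) (T (x (N + (k - N))%nat))))
          by (apply Rmult_le_compat_l; nra).
        nra. }
      lra.
    + exists (2 * sq (vsub (x N) z) + 2 * sq z), N. intros k i Hk.
      replace k with (N + (k - N))%nat by lia.
      specialize (P (k - N)%nat).
      assert (H0 := pos_INR (k - N)).
      assert (H1 := sq_nonneg' n (vsub (x (N + (k - N))%nat) (T (x (N + (k - N))%nat)))).
      assert (H2 := coord_sq_le n (vsub (x (N + (k - N))%nat) z) i).
      assert (H3 := coord_sq_le n z i).
      rewrite coord_vsub in H2.
      assert (H4 := pow2_ge_0 (coord (x (N + (k - N))%nat) i - 2 * coord z i)).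
      assert (0 <= c * INR (k - N) * sq (vsub (x (N + (k - N))%nat) (T (x (N + (k - N))%nat)))).
      { apply Rmult_le_pos; [apply Rmult_le_pos|]; lra. }
      nra.
Qed.
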